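(* Fix constants $c > 0$ and $c' > 0$ and consider RLS-GP with $F = \{\mathrm{AND}, \mathrm{OR}\}$, $L = \{x_1, \ldots, x_n\}$, tree size limit $\ell \ge n$, target $h \in \{\mathrm{AND}_n, \mathrm{OR}_n\}$, evaluating solutions in each iteration on a fresh training set of $s \ge n^{c} \lg^2 n$ inputs sampled uniformly at random from $\{0,1\}^n$, and terminating when the sampled error of its current solution is at most $c' \lg n$. Then, with high probability, within any polynomial number of iterations no solution with a generalisation error greater than $n^{-c}$ has a sampled error of at most $c' \lg n$ on the training set of that iteration.
   Context: Programs are finite rooted binary trees (the empty tree is allowed) whose internal nodes are labelled by binary Boolean functions from $F$ and whose leaves are labelled by literals from $L$; a program computes a Boolean function of $(x_1,\dots,x_n)$ in the obvious way. $\mathrm{AND}_n(x) = x_1 \wedge \dots \wedge x_n$, $\mathrm{OR}_n(x) = x_1 \vee \dots \vee x_n$. The generalisation error of $X$ is $|\{x \in \{0,1\}^n : X(x) \ne h(x)\}|/2^n$. In each iteration a fresh training set of $s$ inputs is drawn independently and uniformly at random from $\{0,1\}^n$; the sampled error $f(X)$ of a program $X$ in that iteration is the number of sampled inputs on which $X$ differs from $h$; parent and offspring are evaluated on the same training set. LeafCount$(X)$ is the number of leaves. HVL-Prime with subtree deletion, applied to a tree $X$: choose $op \in \{\mathrm{INS}, \mathrm{DEL}, \mathrm{SUB}\}$, a literal $l \in L$ and a function $g \in F$, independently and uniformly at random. If $X$ is empty, the result is the single leaf $l$. Otherwise: if $op = \mathrm{INS}$, choose a node $x$ of $X$ uniformly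 at random and replace it by a new node labelled $g$ whose two children are the subtree rooted at $x$ and a new leaf $l$, in uniformly random order; if $op = \mathrm{DEL}$, choose a node $x$ of $X$ (leaf or internal) uniformly at random and replace the parent of $x$ by the sibling of $x$; if $op = \mathrm{SUB}$, choose a leaf of $X$ uniformly at random and replace it by $l$. RLS-GP with tree size limit $\ell$: start with the empty tree $X$; in each iteration let $X' := $ HVL-Prime$(X)$, and if LeafCount$(X') \le \ell$ and $f(X') \le f(X)$ then set $X := X'$. $\lg$ is the base-2 logarithm; ''with high probability'' means with probability tending to $1$ as $n \to \infty$. *)

(* Defs.v *)
From HB Require Import structures.
From mathcomp Require Import all_boot all_order all_algebra.
From mathcomp Require Import all_classical all_reals all_analysis.
Set Implicit Arguments. Unset Strict Implicit. Unset Printing Implicit Defensive.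
Import Order.TTheory GRing.Theory Num.Theory.
Import numFieldNormedType.Exports.
Local Open Scope ring_scope.

Inductive gate := GAnd | GOr.
Definition gate_eval (g : gate) (a b : bool) : bool :=
  match g with GAnd => a && b | GOr => a || b end.

(* Non-empty trees; a leaf [Leaf i] is the literal x_{i+1} (0-based index). *)
Inductive tree := Leaf of nat | Node of gate & tree & tree.
(* A program is a possibly empty tree: [None] is the empty tree. *)
Definition prog := option tree.

Fixpoint teval (x : seq bool) (t : tree) : bool :=
  match t with
  | Leaf i => nth false x i
  | Node g l r => gate_eval g (teval x l) (teval x r)
  end.

Fixpoint nnodes (t : tree) : nat :=
  match t with Leaf _ => 1 | Node _ l r => (nnodes l + nnodes r).+1 end.
Fixpoint nleaves (t : tree) : nat :=
  match t with Leaf _ => 1 | Node _ l r => (nleaves l + nleaves r)%N end.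
Definition LeafCount (X : prog) : nat :=
  match X with None => 0 | Some t => nleaves t end.

(* Nodes are indexed 0 .. nnodes t - 1 in preorder (root = 0). *)
Fixpoint ins_at (t : tree) (i : nat) (g : gate) (l : nat) (b : bool) : tree :=
  if i == 0%N then (if b then Node g t (Leaf l) else Node g (Leaf l) t) else
  match t with
  | Leaf _ => t
  | Node g' tl tr =>
      if (i.-1 < nnodes tl)%N then Node g' (ins_at tl i.-1 g l b) tr
      else Node g' tl (ins_at tr (i.-1 - nnodes tl) g l b)
  end.

(* DEL at node i: replace the parent of node i by the sibling of node i.
   If node i is the root (it has no parent), the result is the empty tree. *)
Fixpoint del_at (t : tree) (i : nat) : prog :=
  match t with
  | Leaf _ => if i == 0%N then None else Some t
  | Node g tl tr =>
      if i == 0%N then None else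
      if (i.-1 < nnodes tl)%N then
        (if i.-1 == 0%N then Some tr
         else Some (Node g (if del_at tl i.-1 is Some t' then t' else tl) tr))
      else
        (if (i.-1 - nnodes tl)%N == 0%N then Some tl
         else Some (Node g tl (if del_at tr (i.-1 - nnodes tl) is Some t' then t' else tr)))
  end.

(* SUB at leaf j (leaves indexed left to right): replace it by the leaf l. *)
Fixpoint sub_at (t : tree) (j : nat) (l : nat) : tree :=
  match t with
  | Leaf _ => Leaf l
  | Node g tl tr =>
      if (j < nleaves tl)%N then Node g (sub_at tl j l) tr
      else Node g tl (sub_at tr (j - nleaves tl) l)
  end.

Section Prob.
Variable R : realType.

(* Expectation of F (HVL-Prime with subtree deletion applied to X) with
   L = {x_1..x_n}: op, l, g uniform and independent; then a uniform node
   (INS/DEL) or leaf (SUB), and a uniform child order (INS). *)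
Definition exp_mut (n : nat) (X : prog) (F : prog -> R) : R :=
  match X with
  | None => (n%:R)^-1 * \sum_(l < n) F (Some (Leaf l))
  | Some t =>
      (3 * n%:R * 2)^-1 * \sum_(l < n) \sum_(g <- [:: GAnd; GOr])
        ( ((nnodes t)%:R * 2)^-1 * \sum_(i < nnodes t)
              (F (Some (ins_at t i g l true)) + F (Some (ins_at t i g l false)))
        + ((nnodes t)%:R)^-1 * \sum_(i < nnodes t) F (del_at t i)
        + ((nleaves t)%:R)^-1 * \sum_(j < nleaves t) F (Some (sub_at t j l)) )
  end.

Definition target (hand : bool) (x : seq bool) : bool :=
  if hand then all id x else has id x.

(* X differs from h on input x (the empty program is taken to be wrong on
   every input). *)
Definition differs (hand : bool) (X : prog) (x : seq bool) : bool :=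
  match X with None => true | Some t => teval x t != target hand x end.

Definition sampled_err (n s : nat) (hand : bool) (X : prog)
    (S : s.-tuple (n.-tuple bool)) : nat :=
  count (fun x : n.-tuple bool => differs hand X x) S.

Definition gen_err (n : nat) (hand : bool) (X : prog) : R :=
  (#|[set x : n.-tuple bool | differs hand X x]|)%:R / (2 ^ n)%:R.

Definition lg (x : R) : R := ln x / ln 2.

Definition bad_eval (c c' : R) (n : nat) (hand : bool) (X : prog) (f : nat) : bool :=
  (n%:R `^ (- c) < gen_err n hand X) && (f%:R <= c' * lg n%:R).

(* Probability that, running RLS-GP (with termination) from X for (at most)
   T iterations, no evaluated solution (parent or offspring) of any iteration
   is bad on that iteration's training set. *)
Fixpoint good_prob (c c' : R) (n : nat) (hand : bool) (ell s : nat)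
    (T : nat) (X : prog) : R :=
  match T with
  | 0 => 1
  | T'.+1 =>
      ((2 ^ (n * s))%:R)^-1 * \sum_(S : s.-tuple (n.-tuple bool))
        exp_mut n X (fun X' =>
          let fX := sampled_err hand X S in
          let fX' := sampled_err hand X' S in
          if bad_eval c c' n hand X fX || bad_eval c c' n hand X' fX' then 0 else
          let acc := (LeafCount X' <= ell)%N && (fX' <= fX)%N in
          let Xn := if acc then X' else X in
          let fn := if acc then fX' else fX in
          if fn%:R <= c' * lg n%:R then 1
          else good_prob c c' n hand ell s T' Xn)
  end.

End Prob.

(* Main.v *)
Require Import Defs.
From HB Require Import structures.
From mathcomp Require Import all_boot all_order all_algebra.
From mathcomp Require Import all_classical all_reals all_analysis.
From mathcomp Require Import ring lra zify.
Import Order.TTheory GRing.Theory Num.Theory.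
Import numFieldNormedType.Exports.
Local Open Scope ring_scope.


Section S.
Variable R : realType.

Lemma sum_aff (I : Type) (r : seq I) (a : R) (f g : I -> R) :
  \sum_(i <- r) (a * f i + g i) = a * \sum_(i <- r) f i + \sum_(i <- r) g i.
Proof. by rewrite big_split mulr_sumr. Qed.

Lemma exp_mut_aff n X (a : R) (F G : prog -> R) :
  exp_mut n X (fun y => a * F y + G y) = a * exp_mut n X F + exp_mut n X G.
Proof.
case: X => [t|] /=; last first.
  rewrite sum_aff; ring.
set c1 := ((nnodes t)%:R * 2)^-1; set c2 := ((nnodes t)%:R)^-1;
set c3 := ((nleaves t)%:R)^-1.
have H : forall l g,
   c1 * \sum_(i < nnodes t) (a * F (Some (ins_at t i g l true)) + G (Some (ins_at t i g l true))
         + (a * F (Some (ins_at t i g l false)) + G (Some (ins_at t i g l false))))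
   + c2 * \sum_(i < nnodes t) (a * F (del_at t i) + G (del_at t i))
   + c3 * \sum_(j < nleaves t) (a * F (Some (sub_at t j l)) + G (Some (sub_at t j l)))
 = a * (c1 * \sum_(i < nnodes t) (F (Some (ins_at t i g l true)) + F (Some (ins_at t i g l false)))
   + c2 * \sum_(i < nnodes t) F (del_at t i)
   + c3 * \sum_(j < nleaves t) F (Some (sub_at t j l)))
   + (c1 * \sum_(i < nnodes t) (G (Some (ins_at t i g l true)) + G (Some (ins_at t i g l false)))
   + c2 * \sum_(i < nnodes t) G (del_at t i)
   + c3 * \sum_(j < nleaves t) G (Some (sub_at t j l))).
  move=> l g.
  rewrite (eq_bigr (fun i : 'I_(nnodes t) => a * (F (Some (ins_at t i g l true)) + F (Some (ins_at t i g l false))) +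
     (G (Some (ins_at t i g l true)) + G (Some (ins_at t i g l false))))); last by move=> i _; ring.
  rewrite !sum_aff; ring.
rewrite (eq_bigr (fun l : 'I_n => \sum_(g <- [:: GAnd; GOr]) (a * (c1 * \sum_(i < nnodes t) (F (Some (ins_at t i g l true)) + F (Some (ins_at t i g l false)))
   + c2 * \sum_(i < nnodes t) F (del_at t i)
   + c3 * \sum_(j < nleaves t) F (Some (sub_at t j l)))
   + (c1 * \sum_(i < nnodes t) (G (Some (ins_at t i g l true)) + G (Some (ins_at t i g l false)))
   + c2 * \sum_(i < nnodes t) G (del_at t i)
   + c3 * \sum_(j < nleaves t) G (Some (sub_at t j l)))))); last first.
  by move=> l _; apply: eq_bigr => g _; rewrite H.
under eq_bigr do rewrite sum_aff.
rewrite sum_aff; ring.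
Qed.

Lemma exp_mut_mono n X (F G : prog -> R) :
  (forall y, F y <= G y) -> exp_mut n X F <= exp_mut n X G.
Proof.
move=> FG; case: X => [t|] /=.
  apply: ler_wpM2l; first by rewrite invr_ge0 mulr_ge0 // mulr_ge0.
  apply: ler_sum => l _; apply: ler_sum => g _.
  apply: lerD; first apply: lerD.
  - apply: ler_wpM2l; first by rewrite invr_ge0 mulr_ge0.
    by apply: ler_sum => i _; apply: lerD.
  - apply: ler_wpM2l; first by rewrite invr_ge0.
    by apply: ler_sum => i _.
  - apply: ler_wpM2l; first by rewrite invr_ge0.
    by apply: ler_sum => i _.
apply: ler_wpM2l; first by rewrite invr_ge0.
by apply: ler_sum => i _.
Qed.

Lemma nnodes_gt0 t : (0 < nnodes t)%N. Proof. by case: t. Qed.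
Lemma nleaves_gt0 t : (0 < nleaves t)%N.
Proof. elim: t => //= g l IHl r _; exact: ltn_addr. Qed.

Lemma exp_mut_const n X (a : R) : (0 < n)%N -> exp_mut n X (fun _ => a) = a.
Proof.
move=> n0; have nR : (n%:R : R) != 0 by rewrite pnatr_eq0 -lt0n.
case: X => [t|] /=; last first.
 by rewrite sumr_const card_ord -[a *+ n]mulr_natr mulrCA mulVf // mulr1.
have t1 : ((nnodes t)%:R : R) != 0 by rewrite pnatr_eq0 -lt0n nnodes_gt0.
have t2 : ((nleaves t)%:R : R) != 0 by rewrite pnatr_eq0 -lt0n nleaves_gt0.
rewrite !sumr_const !card_ord big_cons big_cons big_nil.
rewrite -[(a+a) *+ _]mulr_natr -![a *+ _]mulr_natr addr0.
have h1 : forall x : R, x != 0 -> x^-1 * (a * x) = a by move=> x x0; rewrite mulrCA mulVf // mulr1.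
have h2 : forall x : R, x != 0 -> (x * 2)^-1 * ((a + a) * x) = a.
  move=> x x0; rewrite (_ : (a + a) * x = a * (x * 2)); last by ring.
  by rewrite h1 // mulf_neq0 // pnatr_eq0.
rewrite h2 // !h1 //.
rewrite (_ : (a + a + a + (a + a + a)) *+ n = a * (3 * n%:R * 2)); last first.
  by rewrite -[(a + a + a + (a + a + a)) *+ n]mulr_natr; ring.
by rewrite h1 // !mulf_neq0 // pnatr_eq0.
Qed.

Lemma exp_mut_sum n X (I : Type) (r : seq I) (g : I -> prog -> R) :
  exp_mut n X (fun y => \sum_(i <- r) g i y) = \sum_(i <- r) exp_mut n X (g i).
Proof.
have Z0 : exp_mut n X (fun _ => 0 : R) = 0.
  have := exp_mut_aff n X 1 (fun _ => 0) (fun _ => 0).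
  have -> : (fun y : prog => 1 * (fun _ => (0:R)) y + (fun _ => (0:R)) y) = (fun _ => 0).
    by apply: funext => y; rewrite mul1r addr0.
  by rewrite mul1r -{1}[exp_mut n X _]addr0 => /addrI <-.
elim: r => [|i r IH].
  rewrite big_nil -[RHS]Z0; congr exp_mut; by apply: funext => y; rewrite big_nil.
rewrite big_cons -IH -[exp_mut n X (g i)]mul1r -exp_mut_aff.
by congr exp_mut; apply: funext => y; rewrite big_cons mul1r.
Qed.

End S.


Section S2.
Variable R : realType.

Lemma prod_count (T : eqType) (D : pred T) (r : R) (S : seq T) :
  \prod_(x <- S) (if D x then r else 1) = r ^+ count D S.
Proof.
elim: S => [|x S IH]; first by rewrite big_nil.
by rewrite big_cons IH /=; case: (D x); rewrite ?exprS ?mul1r ?add0n.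
Qed.

Lemma sum_tuple_prod (T : finType) (f : T -> R) s :
  \sum_(S : s.-tuple T) \prod_(x <- S) f x = (\sum_x f x) ^+ s.
Proof.
elim: s => [|s IH].
  rewrite expr0 (eq_bigr (fun _ => 1)); last by move=> S _; rewrite tuple0 big_nil.
  by rewrite sumr_const card_tuple expn0.
rewrite (reindex (fun p : T * s.-tuple T => [tuple of p.1 :: p.2])) /=; last first.
  apply: onW_bij; exists (fun S => (thead S, [tuple of behead S])).
    by case=> x S /=; rewrite theadE; congr pair; apply: val_inj.
  by move=> S; rewrite [RHS]tuple_eta.
rewrite -(pair_bigA _ (fun x (S : s.-tuple T) => \prod_(y <- x :: S) f y)) /=.
rewrite exprS -IH mulr_suml; apply: eq_bigr => x _.
by rewrite mulr_sumr; apply: eq_bigr => S _; rewrite big_cons.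
Qed.

Lemma sum_indic n (D : pred (n.-tuple bool)) (r : R) :
  \sum_x (if D x then r else 1) = (2 ^ n)%:R - (1 - r) * #|[set x | D x]|%:R.
Proof.
rewrite (eq_bigr (fun x => 1 - (1 - r) * (D x)%:R)); last first.
  by move=> x _; case: (D x) => /=; ring.
rewrite sumrB sumr_const card_tuple card_bool -mulr_sumr -natr_sum; congr (_ - _ * _%:R).
rewrite -sum1_card [RHS]big_mkcond; apply: eq_bigr => x _. rewrite inE.
by case: (D x).
Qed.

End S2.


Section S3.
Variable R : realType.

Lemma chernoff_bad (c c' : R) n hand X s :
  (0 < n)%N -> 0 < c' ->
  n%:R `^ c * (lg (n%:R : R))^+2 <= s%:R ->
  ((2 ^ (n * s))%:R)^-1 * \sum_(S : s.-tuple (n.-tuple bool))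
     (bad_eval c c' n hand X (sampled_err hand X S) : nat)%:R
   <= expR (c' * lg (n%:R : R) - (lg (n%:R : R))^+2 / 2).
Proof.
move=> n0 c'0 hs.
set u := lg (n%:R : R).
set d := #|[set x : n.-tuple bool | differs hand X x]|.
have N0 : 0 < ((2^n)%:R : R) by rewrite ltr0n expn_gt0.
have HN : ((2^(n*s))%:R : R) = ((2^n)%:R)^+s by rewrite expnM natrX.
have [hp|hp] := boolP (n%:R `^ (-c) < gen_err R n hand X); last first.
  rewrite big1 ?mulr0 ?expR_ge0 // => S _.
  by rewrite /bad_eval (negbTE hp).
set r : R := expR (-1).
have r0 : 0 < r by rewrite expR_gt0.
have Hb : forall S : s.-tuple (n.-tuple bool),
    (bad_eval c c' n hand X (sampled_err hand X S) : nat)%:R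
      <= expR (c' * u) * r ^+ (sampled_err hand X S).
  move=> S; rewrite /bad_eval hp /=.
  case hf: (_%:R <= c' * _) => /=.
    rewrite /r -expRM_natr -expRD.
    apply: le_trans (expR_ge1Dx _).
    move: hf; rewrite -/u => hf; lra.
  by rewrite mulr_ge0 ?expR_ge0 // exprn_ge0 // ltW.
apply: le_trans (_ : ((2 ^ (n * s))%:R)^-1 *
   \sum_(S : s.-tuple (n.-tuple bool)) (expR (c' * u) * r ^+ (sampled_err hand X S)) <= _).
  by apply: ler_wpM2l; [rewrite invr_ge0 ler0n | apply: ler_sum => S _; apply: Hb].
rewrite -mulr_sumr.
rewrite (eq_bigr (fun S : s.-tuple (n.-tuple bool) => \prod_(x <- S) (if differs hand X x then r else 1))); last first.
  by move=> S _; rewrite prod_count.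
rewrite sum_tuple_prod sum_indic -/d HN.
set p := gen_err R n hand X.
have pE : p = d%:R / (2^n)%:R by [].
have dle : (d%:R : R) <= (2^n)%:R.
  rewrite ler_nat; apply: leq_trans (max_card _) _.
  by rewrite card_tuple card_bool.
have p1 : p <= 1 by rewrite pE ler_pdivrMr // mul1r.
have p0 : 0 <= p by rewrite pE divr_ge0 // ler0n.
have E : ((2 ^ n)%:R ^+ s)^-1 * (expR (c' * u) * ((2 ^ n)%:R - (1 - r) * d%:R) ^+ s)
     = expR (c' * u) * (1 - (1 - r) * p) ^+ s.
  rewrite pE mulrCA; congr (_ * _).
  rewrite -exprVn -exprMn; congr (_ ^+ _).
  by field; rewrite gt_eqF.
rewrite E.
have e1 : 2 <= expR (1 : R) by have := expR_ge1Dx (1 : R); lra.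
have re : expR 1 * r = 1 by rewrite /r expRxMexpNx_1.
have rh : r <= 1 / 2 by nra.
have b0 : 0 <= 1 - (1 - r) * p by nra.
apply: le_trans (_ : expR (c' * u) * expR (- (1 - r) * p) ^+ s <= _).
  apply: ler_wpM2l; first exact: expR_ge0.
  apply: lerXn2r; rewrite ?nnegrE ?expR_ge0 //.
  by apply: le_trans (expR_ge1Dx _); lra.
rewrite -expRM_natr -expRD; rewrite ler_expR.
have P0 : 0 < (n%:R : R) `^ c by apply: powR_gt0; rewrite ltr0n.
have Pq : (n%:R : R) `^ (- c) * (n%:R `^ c) = 1 by rewrite powRN mulVf // gt_eqF.
move: hp; rewrite -/p => hp.
have u2 : 0 <= u ^+ 2 by exact: sqr_ge0.
have ps : u ^+ 2 <= p * s%:R.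
  have h1 : p * (n%:R `^ c * u ^+ 2) <= p * s%:R by apply: ler_wpM2l.
  apply: le_trans h1.
  have h2 : (n%:R : R) `^ (- c) * (n%:R `^ c * u ^+ 2) <= p * (n%:R `^ c * u ^+ 2).
    by apply: ler_wpM2r; [nra | exact: ltW].
  by apply: le_trans h2; rewrite mulrA Pq mul1r.
nra.
Qed.

End S3.


Section S4.
Variable R : realType.

Lemma exp_mut0 n X : exp_mut n X (fun _ => 0 : R) = 0.
Proof.
have := exp_mut_aff R n X 1 (fun _ => 0) (fun _ => 0).
have -> : (fun y : prog => 1 * (fun _ => (0:R)) y + (fun _ => (0:R)) y) = (fun _ => 0).
  by apply: funext => y; rewrite mul1r addr0.
by rewrite mul1r -{1}[exp_mut n X _]addr0 => /addrI <-.
Qed.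

Lemma exp_mut_scale n X (a : R) F : exp_mut n X (fun y => a * F y) = a * exp_mut n X F.
Proof.
have := exp_mut_aff R n X a F (fun _ => 0).
rewrite exp_mut0 addr0 => <-; congr exp_mut; apply: funext => y; by rewrite addr0.
Qed.

Lemma avg_const n s (a : R) :
  ((2 ^ (n * s))%:R)^-1 * \sum_(S : s.-tuple (n.-tuple bool)) a = a.
Proof.
rewrite sumr_const !card_tuple card_bool -expnM -[a *+ _]mulr_natr mulrCA mulVf ?mulr1 //.

Qed.

Variables (c c' : R) (n : nat) (hand : bool) (ell s : nat) (delta : R).
Hypothesis n0 : (0 < n)%N.
Hypothesis d0 : 0 <= delta.
Definition bb (X : prog) (S : s.-tuple (n.-tuple bool)) : R :=
  (bad_eval c c' n hand X (sampled_err hand X S) : nat)%:R.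
Hypothesis Hd : forall X,
  ((2 ^ (n * s))%:R)^-1 * \sum_(S : s.-tuple (n.-tuple bool)) bb X S <= delta.

Definition Phi T (X : prog) (S : s.-tuple (n.-tuple bool)) (X' : prog) : R :=
        if
         bad_eval (R:=R) c c' n hand X (sampled_err hand X S)
         || bad_eval (R:=R) c c' n hand X' (sampled_err hand X' S)
        then 0
        else
         if
          (if
            (LeafCount X' <= ell)%N &&
            (sampled_err hand X' S <= sampled_err hand X S)%N
           then sampled_err hand X' S
           else sampled_err hand X S)%:R <=
          c' * lg (R:=R) n%:R
         then 1
         else
          good_prob (R:=R) c c' n hand ell s T
            (if
              (LeafCount X' <= ell)%N &&
              (sampled_err hand X' S <= sampled_err hand X S)%N
             then X'
             else X).

Lemma good_bounds T X :
  1 - 2 * T%:R * delta <= good_prob c c' n hand ell s T X <= 1.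
Proof.
elim: T X => [|T IH] X.
  by rewrite /= mulr0 mul0r subr0 lexx.
set L := 1 - 2 * T%:R * delta.
have L1 : L <= 1 by rewrite /L gerBl !mulr_ge0 // ler0n.
set W : R := ((2 ^ (n * s))%:R)^-1.
have W0 : 0 <= W by rewrite /W invr_ge0 ler0n.
have -> : good_prob c c' n hand ell s T.+1 X = W * \sum_(S : s.-tuple (n.-tuple bool)) exp_mut n X (Phi T X S) by [].
have HPhi : forall S X', L - bb X S - bb X' S <= Phi T X S X' <= 1.
  move=> S X'; rewrite /Phi /bb.
  case: (bad_eval _ _ _ _ X _); case: (bad_eval _ _ _ _ X' _) => /=;
    try (apply/andP; split; [lra | lra]).
  case: ifP => _; first by apply/andP; split; lra.
  have /andP[h1 h2] := IH (if (LeafCount X' <= ell)%N && (sampled_err hand X' S <= sampled_err hand X S)%N then X' else X).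
  by rewrite !subr0 /L h1 h2.
apply/andP; split; last first.
  rewrite -[X in _ <= X](avg_const n s 1).
  apply: ler_wpM2l => //; apply: ler_sum => S _.
  rewrite -(exp_mut_const R n X 1 n0); apply: exp_mut_mono => y.
  by have /andP[] := HPhi S y.
apply: le_trans (_ : W * \sum_(S : s.-tuple (n.-tuple bool))
    exp_mut n X (fun y => -1 * bb y S + (L - bb X S)) <= _); last first.
  apply: ler_wpM2l => //; apply: ler_sum => S _; apply: exp_mut_mono => y.
  by have /andP[h1 _] := HPhi S y; lra.
under eq_bigr do rewrite exp_mut_aff exp_mut_const //.
rewrite big_split /= -mulr_sumr -exp_mut_sum sumrB mulrDr mulrBr avg_const mulNr mul1r mulrN.
rewrite -exp_mut_scale.
have H1 : exp_mut n X (fun y => W * \sum_(i : s.-tuple (n.-tuple bool)) bb y i) <= delta.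
  rewrite -(exp_mut_const R n X delta n0); apply: exp_mut_mono => y; exact: Hd.
have H2 := Hd X.
rewrite -/W in H1 H2.
rewrite /L -addn1 natrD; lra.
Qed.

End S4.

Local Open Scope classical_set_scope.
Local Open Scope ring_scope.


Theorem lemma11 (R : realType) (c c' : R) (k : nat)
    (T ell s : nat -> nat) (hand : nat -> bool) :
  0 < c -> 0 < c' ->
  (forall n, T n <= n.+1 ^ k)%N ->
  (forall n, n <= ell n)%N ->
  (forall n, (n%:R `^ c) * (lg (n%:R : R)) ^+ 2 <= (s n)%:R) ->
  (fun n => good_prob c c' n (hand n) (ell n) (s n) (T n) None) @ \oo --> (1 : R).
Proof.
move=> c0 c'0 HT Hell Hs.
set a : R := ln 2.
have a0 : 0 < a by rewrite ln_gt0 // ltr1n.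
apply/cvgrPdist_le => eps eps0.
set l := ln eps.
set K : R := k%:R.
have K0 : 0 <= K by rewrite ler0n.
set A := a + a * K.
set B := a * K + c'.
have A0 : 0 <= A by rewrite /A; nra.
have B0 : 0 <= B by rewrite /B; nra.
set M := 1 + 2 * (A + B + `|l|).
exists (Num.Def.trunc (expR (M * a))).+1 => // n /= hn.
have n0 : (0 < n)%N by apply: leq_trans hn.
have nR0 : 0 < (n%:R : R) by rewrite ltr0n.
have nR : expR (M * a) < n%:R.
  by apply: lt_le_trans (truncnS_gt _) _; rewrite ler_nat.
set u := lg (n%:R : R).
have ua : u * a = ln (n%:R : R) by rewrite /u /lg divfK // gt_eqF.
have uM : M <= u.
  rewrite -(ler_pM2r a0) ua -[X in X <= _](expRK (M * a)).
  by rewrite ler_ln ?posrE ?expR_gt0 // ltW.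
set delta := expR (c' * u - u ^+ 2 / 2).
have d0 : 0 <= delta by apply: expR_ge0.
have Hd : forall X, ((2 ^ (n * s n))%:R)^-1 *
    \sum_(S : (s n).-tuple (n.-tuple bool)) bb R c c' n (hand n) (s n) X S <= delta.
  move=> X; have := (chernoff_bad R c c' n (hand n) X (s n) n0 c'0 (Hs n)). by [].
have /andP[hb1 hb2] := good_bounds R c c' n (hand n) (ell n) (s n) delta n0 d0 Hd (T n) None.
rewrite ger0_norm ?subr_ge0 //.
apply: le_trans (_ : 2 * (T n)%:R * delta <= _); first lra.
have HT1 : ((T n)%:R : R) <= expR ((a + u * a) * K).
  apply: le_trans (_ : ((n.+1)%:R : R) ^+ k <= _).
    by rewrite -natrX ler_nat.
  rewrite /K expRM_natr; apply: lerXn2r; rewrite ?nnegrE ?ler0n ?expR_ge0 //.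
  rewrite expRD ua lnK ?posrE // /a lnK ?posrE //.
  by rewrite -natrM ler_nat; lia.
have E2 : (2 : R) = expR a by rewrite /a lnK ?posrE.
apply: le_trans (_ : expR a * expR ((a + u * a) * K) * delta <= _).
  rewrite -E2; apply: ler_wpM2r => //; apply: ler_wpM2l => //.
rewrite /delta -!expRD -[X in _ <= X](lnK (x := eps)) ?posrE // ler_expR -/l.
have u1 : 1 <= u by apply: le_trans uM; rewrite /M; have := normr_ge0 l; lra.
have la : - `|l| <= l by rewrite lerNl -normrN ler_norm.
have h1 : u * (A + B + `|l|) <= u ^+ 2 / 2.
  have : u * M <= u * u by apply: ler_wpM2l => //; lra.
  rewrite /M; nra.
have h2 : A + `|l| <= u * (A + `|l|) by have := normr_ge0 l; nra.
have -> : a + (a + u * a) * K + (c' * u - u ^+ 2 / 2) = A + B * u - u ^+ 2 / 2 by rewrite /A /B; ring.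
nra.
Qed.
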